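(* Let $G$ be a finite connected graph with graph distance $d$ and let $\delta$ be its four-points hyperbolicity constant. Then $$\delta\le\max_{u_1,u_2,u_3,u_4\in V(G)}\ \min_{i\ne j} d(u_i,u_j).$$
   Context: The four-points hyperbolicity constant of $G$ is the smallest $\delta\ge0$ such that for all vertices $a,b,c,e$: $d(a,b)+d(c,e)\le\max\{d(a,c)+d(b,e),\ d(a,e)+d(b,c)\}+2\delta$. *)

(* Defs.v *)
From mathcomp Require Import all_boot all_order all_algebra.
Set Implicit Arguments. Unset Strict Implicit. Unset Printing Implicit Defensive.
Import Order.TTheory GRing.Theory Num.Theory.

Definition simple_graph (T : finType) (e : rel T) : Prop :=
  symmetric e /\ irreflexive e.

Definition connected_graph (T : finType) (e : rel T) : Prop :=
  forall x y : T, connect e x y.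

Fixpoint walk (T : finType) (e : rel T) (n : nat) (x y : T) : bool :=
  if n is n'.+1 then [exists z, e x z && walk e n' z y] else x == y.

(* Graph distance: least n such that a walk of length n from x to y exists.
   In a connected graph a shortest walk has length < #|T|, so searching
   n in [0, #|T|) gives the true distance. *)
Definition gdist (T : finType) (e : rel T) (x y : T) : nat :=
  find (fun n => walk e n x y) (iota 0 #|T|).

Definition four_point (R : realFieldType) (T : finType) (e : rel T) (delta : R)
  : Prop :=
  forall a b c d : T,
    (((gdist e a b + gdist e c d)%:R : R) <=
      Num.max ((gdist e a c + gdist e b d)%:R) ((gdist e a d + gdist e b c)%:R)
      + 2 * delta)%R.

Definition is_hyp_const (R : realFieldType) (T : finType) (e : rel T) (delta : R)
  : Prop :=
  (0 <= delta /\ four_point e delta /\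
  (forall delta' : R, 0 <= delta' -> four_point e delta' -> delta <= delta'))%R.

(* min_{i != j} d(u_i, u_j) over the six unordered pairs (d is symmetric) *)
Definition min_pair (T : finType) (e : rel T) (u1 u2 u3 u4 : T) : nat :=
  minn (minn (minn (gdist e u1 u2) (gdist e u1 u3)) (minn (gdist e u1 u4) (gdist e u2 u3)))
       (minn (gdist e u2 u4) (gdist e u3 u4)).

Definition maxmin4 (T : finType) (e : rel T) : nat :=
  \max_(q : T * T * T * T) min_pair e q.1.1.1 q.1.1.2 q.1.2 q.2.

(* Main.v *)
Require Import Defs.
From mathcomp Require Import all_boot all_order all_algebra.
From mathcomp Require Import zify.
Set Implicit Arguments. Unset Strict Implicit.
Import Order.TTheory GRing.Theory Num.Theory.

Section G.
Variables (T : finType) (e : rel T).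

Lemma walk_cat m n x y z : walk e m x y -> walk e n y z -> walk e (m + n) x z.
Proof.
elim: m x => [|m IH] x /=; first by move/eqP->.
case/existsP=> w /andP[exw hw] hyz; apply/existsP; exists w.
by rewrite exw (IH _ hw hyz).
Qed.

Lemma walk_path x p : path e x p -> walk e (size p) x (last x p).
Proof.
elim: p x => [|w p IH] x /=; first by [].
case/andP=> exw hp; apply/existsP; exists w; by rewrite exw IH.
Qed.

Lemma walk_short x y : connect e x y -> exists2 n, n < #|T| & walk e n x y.
Proof.
case/connectP=> p hp ->.
case: (shortenP hp) => p' hp' u _.
exists (size p'); last exact: walk_path.
have hc := card_uniqP u.
by have := max_card (mem (x :: p')); rewrite hc.
Qed.

Lemma gdist_le n x y : n < #|T| -> walk e n x y -> gdist e x y <= n.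
Proof.
move=> hn hw; rewrite /gdist; case: leqP => // hlt.
have := before_find 0 hlt; rewrite nth_iota ?size_iota // add0n hw //.
Qed.

Lemma gdist_walk x y : connect e x y ->
  gdist e x y < #|T| /\ walk e (gdist e x y) x y.
Proof.
case/walk_short=> n hn hw.
have hh : has (fun n => walk e n x y) (iota 0 #|T|).
  by apply/hasP; exists n => //; rewrite mem_iota.
have := has_find (fun n => walk e n x y) (iota 0 #|T|); rewrite hh size_iota => hf.
split; first by rewrite -hf.
have := nth_find 0 hh; rewrite nth_iota ?size_iota // add0n.
Qed.

Hypothesis hs : simple_graph e.
Hypothesis hc : connected_graph e.

Lemma walk_sym n x y : walk e n x y -> walk e n y x.
Proof.
elim: n x y => [|n IH] x y; first by rewrite /= eq_sym.
move=> /= /existsP [w /andP[exw hw]].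
have h1 : walk e 1 w x by apply/existsP; exists x; rewrite /= eqxx andbT (proj1 hs).
have := walk_cat (IH _ _ hw) h1; by rewrite addn1.
Qed.

Lemma gdist_sym x y : gdist e x y = gdist e y x.
Proof.
have h a b : gdist e b a <= gdist e a b.
  case: (gdist_walk (hc a b)) => h1 h2; exact: gdist_le h1 (walk_sym h2).
by apply/eqP; rewrite eqn_leq !h.
Qed.

Lemma gdist_tri x y z : gdist e x z <= gdist e x y + gdist e y z.
Proof.
case: (gdist_walk (hc x y)) => h1 w1; case: (gdist_walk (hc y z)) => h2 w2.
case: (gdist_walk (hc x z)) => h3 _.
case: (ltnP (gdist e x y + gdist e y z) #|T|) => hl.
  exact: gdist_le hl (walk_cat w1 w2).
exact: leq_trans (ltnW h3) hl.
Qed.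

End G.

Local Open Scope ring_scope.

Theorem mainTheorem6 (R : realFieldType) (T : finType) (e : rel T)
  (hs : simple_graph e) (hc : connected_graph e) (delta : R)
  (hd : is_hyp_const e delta) :
  delta <= (maxmin4 e)%:R.
Proof.
case: hd => _ [_ hmin]; apply: hmin; first exact: ler0n.
move=> a b c d.
have hm : (min_pair e a b c d <= maxmin4 e)%N.
  exact: (@leq_bigmax _ (fun q : T * T * T * T => min_pair e q.1.1.1 q.1.1.2 q.1.2 q.2) (a, b, c, d)).
have T1 := gdist_tri hc; have S := gdist_sym hs hc.
have H : ((gdist e a b + gdist e c d <= gdist e a c + gdist e b d + 2 * maxmin4 e) ||
          (gdist e a b + gdist e c d <= gdist e a d + gdist e b c + 2 * maxmin4 e))%N.
  move: hm; rewrite /min_pair.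
  have := T1 a b c; have := T1 a b d; have := T1 a c b; have := T1 a c d;
  have := T1 a d b; have := T1 a d c; have := T1 b a c; have := T1 b a d;
  have := T1 b c d; have := T1 b d c; have := T1 c a d; have := T1 c b d.
  rewrite ?(S b a) ?(S c a) ?(S d a) ?(S c b) ?(S d b) ?(S d c).
  lia.
case/orP: H => H.
- apply: le_trans (_ : ((gdist e a c + gdist e b d)%:R + 2 * (maxmin4 e)%:R <= _)).
    by rewrite -natrM -natrD ler_nat.
  by rewrite lerD2r le_max lexx.
- apply: le_trans (_ : ((gdist e a d + gdist e b c)%:R + 2 * (maxmin4 e)%:R <= _)).
    by rewrite -natrM -natrD ler_nat.
  by rewrite lerD2r le_max lexx orbT.
Qed.
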